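(* Let $v\ge2$ be an integer with $\gcd(v,4)\ne2$ and $\gcd(v,18)\ne3$. Then an optimum $(d,2)$-CDA$((d+1)v^2;11,v)$ exists for every positive integer $d$ with $d+1\le v$.
   Context: Consecutive $t$-way interaction in an $N\times k$ array $A=(a_{ij})$ over a $v$-set $V$: $T=\{(i,x_i),\dots,(i+t-1,x_{i+t-1})\}$, $1\le i\le k-t+1$, $x_r\in V$; $\rho(A,T)=\{r: a_{r,j}=x_j\ \forall (j,x_j)\in T\}$, $\rho(A,\mathcal T)=\bigcup_{T\in\mathcal T}\rho(A,T)$. A $(d,t)$-CDA$(N;k,v)$ is an $N\times k$ array over $V$ in which every $t$ consecutive columns contain every $t$-tuple at least once, and such that for every set $\mathcal T$ of exactly $d$ distinct consecutive $t$-way interactions and every consecutive $t$-way interaction $T$: $\rho(A,T)\subseteq\rho(A,\mathcal T)$ iff $T\in\mathcal T$. It is optimum if $N=(d+1)v^t$. *)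

(* Defs.v *)
From mathcomp Require Import all_boot.
Set Implicit Arguments. Unset Strict Implicit. Unset Printing Implicit Defensive.

(* An N x k array over the v-set V := 'I_v is a function 'I_N -> 'I_k -> 'I_v
   (rows r, columns c).  Columns are 0-indexed.  A consecutive t-way
   interaction {(i,x_0),(i+1,x_1),...,(i+t-1,x_{t-1})} is represented by the
   pair (i, x) with i : 'I_k the starting column and x : 'I_t -> 'I_v the
   values; it is valid when i + t <= k.  (For t >= 1 distinct pairs are
   distinct interactions.) *)

Definition cinter (k t v : nat) : finType := ('I_k * {ffun 'I_t -> 'I_v})%type.

Definition valid_inter (k t v : nat) (T : cinter k t v) : bool := T.1 + t <= k.

Definition rho (N k t v : nat) (A : 'I_N -> 'I_k -> 'I_v) (T : cinter k t v)
  : {set 'I_N} :=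
  [set r : 'I_N | [forall j : 'I_t, forall c : 'I_k,
                    (nat_of_ord c == T.1 + j) ==> (A r c == T.2 j)]].

Definition rhoS (N k t v : nat) (A : 'I_N -> 'I_k -> 'I_v) (S : {set cinter k t v})
  : {set 'I_N} :=
  \bigcup_(T in S) rho A T.

Definition is_CDA (d t N k v : nat) (A : 'I_N -> 'I_k -> 'I_v) : Prop :=
  (forall T : cinter k t v, valid_inter T -> rho A T != set0) /\
  (forall (S : {set cinter k t v}) (T : cinter k t v),
      (forall T', T' \in S -> valid_inter T') -> #|S| = d -> valid_inter T ->
      (rho A T \subset rhoS A S <-> T \in S)).

(* Main.v *)
Require Import Defs.
From mathcomp Require Import all_boot.
From mathcomp Require Import zify.
Set Implicit Arguments. Unset Strict Implicit. Unset Printing Implicit Defensive.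

Definition GoodP (V : finType) (B : V -> V -> V -> nat -> V) :=
 (forall z x y x' y' c, c < 10 -> B z x y c = B z x' y' c ->
     B z x y c.+1 = B z x' y' c.+1 -> x = x' /\ y = y') /\
 (forall z x y z' x' y' i j, i < j -> j <= 9 ->
     B z x y i = B z' x' y' i -> B z x y i.+1 = B z' x' y' i.+1 ->
     B z x y j = B z' x' y' j -> B z x y j.+1 = B z' x' y' j.+1 ->
     [/\ z = z', x = x' & y = y']).

Definition GoodT (V : finType) := exists B, @GoodP V B.

Lemma goodT_card (V W : finType) : #|V| = #|W| -> GoodT V -> GoodT W.
Proof.
move=> E [B [H1 H2]].
pose f (v : V) : W := enum_val (cast_ord E (enum_rank v)).
pose g (w : W) : V := enum_val (cast_ord (esym E) (enum_rank w)).
have fK : cancel f g by move=> v; rewrite /f /g enum_valK cast_ordK enum_rankK.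
have gK : cancel g f by move=> w; rewrite /f /g enum_valK cast_ordKV enum_rankK.
have fI := can_inj fK; have gI := can_inj gK.
exists (fun z x y c => f (B (g z) (g x) (g y) c)); split.
  move=> z x y x' y' c Hc /fI e1 /fI e2.
  by case: (H1 _ _ _ _ _ _ Hc e1 e2) => /gI -> /gI ->.
move=> z x y z' x' y' i j Hij Hj /fI e1 /fI e2 /fI e3 /fI e4.
by case: (H2 _ _ _ _ _ _ _ _ Hij Hj e1 e2 e3 e4) => /gI -> /gI -> /gI ->.
Qed.

Lemma goodT_prod (V W : finType) : GoodT V -> GoodT W -> GoodT (V * W)%type.
Proof.
move=> [B [H1 H2]] [C [K1 K2]].
exists (fun z x y c => (B z.1 x.1 y.1 c, C z.2 x.2 y.2 c)); split.
  move=> [z1 z2] [x1 x2] [y1 y2] [x1' x2'] [y1' y2'] c Hc /= [e1 f1] [e2 f2].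
  case: (H1 _ _ _ _ _ _ Hc e1 e2) => -> ->.
  by case: (K1 _ _ _ _ _ _ Hc f1 f2) => -> ->.
move=> [z1 z2] [x1 x2] [y1 y2] [z1' z2'] [x1' x2'] [y1' y2'] i j Hij Hj /=
  [e1 f1] [e2 f2] [e3 f3] [e4 f4].
case: (H2 _ _ _ _ _ _ _ _ Hij Hj e1 e2 e3 e4) => -> -> ->.
by case: (K2 _ _ _ _ _ _ _ _ Hij Hj f1 f2 f3 f4) => -> -> ->.
Qed.

Definition Good n := GoodT 'I_n.

Lemma good_mul m n : Good m -> Good n -> Good (m * n).
Proof.
move=> Hm Hn; apply: (goodT_card _ (goodT_prod Hm Hn)).
by rewrite card_prod !card_ord.
Qed.

Lemma good1 : Good 1.
Proof.
exists (fun z _ _ _ => z); split.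
  by move=> z x y x' y' c _ _ _; rewrite (ord1 x) (ord1 x') (ord1 y) (ord1 y').
by move=> z x y z' x' y' *; rewrite (ord1 x) (ord1 x') (ord1 y) (ord1 y') (ord1 z) (ord1 z').
Qed.


Definition Ycol i := if odd i then i.+1 else i.
Definition Xcol i := if odd i then i else i.+1.

Definition Cond n (g : nat -> nat -> nat) := forall i j z z', i < j -> j <= 9 ->
  z < n -> z' < n ->
  g (Ycol i) z + g (Ycol j) z' = g (Ycol i) z' + g (Ycol j) z %[mod n] ->
  g (Xcol i) z + g (Xcol j) z' = g (Xcol i) z' + g (Xcol j) z %[mod n] -> z = z'.

Lemma modD_cancel a b k n : a < n -> b < n -> (a + k) %% n = (b + k) %% n -> a = b.
Proof. by move=> ha hb /eqP; rewrite eqn_modDr !modn_small // => /eqP. Qed.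

Lemma cong_comb n y y' a b a' b' : y + a = y' + a' %[mod n] ->
  y + b = y' + b' %[mod n] -> a + b' = a' + b %[mod n].
Proof.
move=> h1 h2; apply/eqP; rewrite -(eqn_modDl (y + y')); apply/eqP.
have: (y + a) + (y' + b') = (y' + a') + (y + b) %[mod n].
  by rewrite -modnDm h1 -h2 modnDm.
by rewrite addnACA [(y' + a') + _]addnACA [y' + y]addnC.
Qed.

Lemma zn_good n g : 0 < n -> Cond n g -> Good n.
Proof.
move=> n0 HC.
pose B (z x y : 'I_n) (c : nat) : 'I_n :=
  Ordinal (ltn_pmod ((if odd c then (x : nat) else y) + g c z) n0).
have hc : forall z x y z' x' y' c, B z x y c = B z' x' y' c ->
  (if odd c then (x : nat) else y) + g c z = (if odd c then (x' : nat) else y') + g c z' %[mod n].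
  by move=> z x y z' x' y' c /(congr1 val).
have P1 : forall z x y x' y' c, c < 10 -> B z x y c = B z x' y' c ->
     B z x y c.+1 = B z x' y' c.+1 -> x = x' /\ y = y'.
  move=> z x y x' y' c _ /hc e1 /hc e2; rewrite /= in e2.
  case oc: (odd c) e1 e2 => /= e1 e2; split; apply: val_inj.
  - exact: modD_cancel e1.
  - exact: modD_cancel e2.
  - exact: modD_cancel e2.
  - exact: modD_cancel e1.
exists B; split => //.
move=> z x y z' x' y' i j Hij Hj e1 e2 e3 e4.
have Yi : (y : nat) + g (Ycol i) z = y' + g (Ycol i) z' %[mod n].
  rewrite /Ycol; case oi: (odd i); [move: (hc _ _ _ _ _ _ _ e2) | move: (hc _ _ _ _ _ _ _ e1)];
  by rewrite /= ?oi.
have Yj : (y : nat) + g (Ycol j) z = y' + g (Ycol j) z' %[mod n].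
  rewrite /Ycol; case oi: (odd j); [move: (hc _ _ _ _ _ _ _ e4) | move: (hc _ _ _ _ _ _ _ e3)];
  by rewrite /= ?oi.
have Xi : (x : nat) + g (Xcol i) z = x' + g (Xcol i) z' %[mod n].
  rewrite /Xcol; case oi: (odd i); [move: (hc _ _ _ _ _ _ _ e1) | move: (hc _ _ _ _ _ _ _ e2)];
  by rewrite /= ?oi.
have Xj : (x : nat) + g (Xcol j) z = x' + g (Xcol j) z' %[mod n].
  rewrite /Xcol; case oi: (odd j); [move: (hc _ _ _ _ _ _ _ e3) | move: (hc _ _ _ _ _ _ _ e4)];
  by rewrite /= ?oi.
have ez : z = z'.
  apply: val_inj; exact: (HC i j _ _ Hij Hj (ltn_ord z) (ltn_ord z') (cong_comb Yi Yj) (cong_comb Xi Xj)).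
subst z'.
have [-> ->] := P1 _ _ _ _ _ i (ltn_trans Hij (leq_ltn_trans Hj (ltnSn 9))) e1 e2.
by split.
Qed.


Lemma key1 n d z z' : coprime n d -> z < n -> z' < n -> d * z = d * z' %[mod n] -> z = z'.
Proof.
move=> cd.
wlog le : z z' / z <= z'.
  move=> W hz hz' H; case: (leqP z z') => l; first exact: W.
  by apply/esym; exact: (W z' z (ltnW l) hz' hz (esym H)).
move=> _ hz' /esym/eqP; rewrite eqn_mod_dvd ?leq_mul2l ?le ?orbT // -mulnBr Gauss_dvdr //.
case: (posnP (z' - z)) => [/eqP|p].
  by rewrite subn_eq0 => h _; apply/eqP; rewrite eqn_leq le h.
move/(dvdn_leq p) => h; have: z' - z < n by apply: leq_ltn_trans (leq_subr _ _) hz'.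
by rewrite ltnNge h.
Qed.

Lemma key_ab n a b z z' : coprime n (b - a) -> a < b -> z < n -> z' < n ->
  a * z + b * z' = a * z' + b * z %[mod n] -> z = z'.
Proof.
move=> cd ab hz hz'.
have eb : b = a + (b - a) by rewrite subnKC // ltnW.
set d := b - a in cd eb *; rewrite eb !mulnDl.
rewrite addnA [a * z' + (a * z + _)]addnA [a * z' + a * z]addnC.
move/eqP; rewrite eqn_modDl => /eqP H.
by apply/esym; apply: (key1 cd) => //.
Qed.

Lemma cop6 n d : coprime n 6 -> 0 < d -> d <= 3 -> coprime n d.
Proof.
rewrite (_ : 6 = 2 * 3) // coprimeMr => /andP[c2 c3].
by case: d => [|[|[|[|]]]] //= _ _; rewrite ?coprimen1.
Qed.

Lemma key n a b z z' : coprime n 6 -> a <= 3 -> b <= 3 -> a != b -> z < n -> z' < n ->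
  a * z + b * z' = a * z' + b * z %[mod n] -> z = z'.
Proof.
move=> c6 ha hb nab hz hz' H.
case: (ltngtP a b) => [ab|ba|eab]; last by rewrite eab eqxx in nab.
  have cd : coprime n (b - a).
    by apply: cop6 => //; [rewrite subn_gt0 | exact: leq_trans (leq_subr _ _) hb].
  exact: (key_ab cd ab hz hz' H).
have cd : coprime n (a - b).
  by apply: cop6 => //; [rewrite subn_gt0 | exact: leq_trans (leq_subr _ _) ha].
apply/esym; apply: (key_ab cd ba hz' hz).
by rewrite addnC H addnC.
Qed.

Definition evec := [:: 0; 0; 1; 1; 2; 2; 3; 3; 0; 1; 3].
Definition glin (c z : nat) := nth 0 evec c * z.

Lemma glin_cond n : coprime n 6 -> Cond n glin.
Proof.
move=> c6 i j z z' ij j9 hz hz'.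
have ALL : all (fun i => all (fun j =>
   (nth 0 evec (Ycol i) != nth 0 evec (Ycol j)) || (nth 0 evec (Xcol i) != nth 0 evec (Xcol j)))
   (iota i.+1 (9 - i))) (iota 0 10) by [].
have i10 : i < 10 := ltn_trans ij (leq_ltn_trans j9 (ltnSn 9)).
have hi : i \in iota 0 10 by rewrite mem_iota.
have hj : j \in iota i.+1 (9 - i).
  by rewrite mem_iota ij /= addSn subnKC ?ltnS // -ltnS.
have := allP (allP ALL i hi) j hj.
have b3 : forall c, c <= 10 -> nth 0 evec c <= 3.
  by move=> c; do 11 (case: c => [//|c]).
have hY : forall k, k <= 9 -> Ycol k <= 10 by move=> k; rewrite /Ycol; case: (odd k) => // h; exact: leqW.
have hX : forall k, k <= 9 -> Xcol k <= 10 by move=> k; rewrite /Xcol; case: (odd k) => // h; exact: leqW.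
have i9 : i <= 9 by apply: leq_trans j9; apply: ltnW.
case/orP => ne HY HX.
  by apply: (key c6 (b3 _ (hY _ i9)) (b3 _ (hY _ j9)) ne hz hz' HY).
by apply: (key c6 (b3 _ (hX _ i9)) (b3 _ (hX _ j9)) ne hz hz' HX).
Qed.

Lemma good_cop6 n : 0 < n -> coprime n 6 -> Good n.
Proof. by move=> n0 c6; apply: (zn_good n0 (glin_cond c6)). Qed.


Definition tabg (tab : seq (seq nat)) (c z : nat) := nth 0 (nth [::] tab c) z.

Definition checkb n tab :=
  let g := tabg tab in
  all (fun i => all (fun j => all (fun z => all (fun z' =>
    (z == z') || ~~ ((g (Ycol i) z + g (Ycol j) z' == g (Ycol i) z' + g (Ycol j) z %[mod n]) &&
                     (g (Xcol i) z + g (Xcol j) z' == g (Xcol i) z' + g (Xcol j) z %[mod n])))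
   (iota 0 n)) (iota 0 n)) (iota i.+1 (9 - i))) (iota 0 10).

Lemma checkb_cond n tab : checkb n tab -> Cond n (tabg tab).
Proof.
move=> C i j z z' ij j9 hz hz' HY HX.
have i10 : i < 10 := ltn_trans ij (leq_ltn_trans j9 (ltnSn 9)).
have hi : i \in iota 0 10 by rewrite mem_iota.
have hj : j \in iota i.+1 (9 - i) by rewrite mem_iota ij /= addSn subnKC ?ltnS // -ltnS.
have hz0 : z \in iota 0 n by rewrite mem_iota.
have hz1 : z' \in iota 0 n by rewrite mem_iota.
have := allP (allP (allP (allP C i hi) j hj) z hz0) z' hz1.
by rewrite HY HX !eqxx /= orbF => /eqP.
Qed.
Definition tab4 : seq (seq nat) := [:: [:: 0; 0; 1; 3]; [:: 0; 1; 2; 2]; [:: 0; 3; 2; 1]; [:: 0; 0; 3; 0]; [:: 0; 2; 0; 2]; [:: 0; 1; 1; 3]; [:: 0; 1; 2; 3]; [:: 0; 2; 0; 1]; [:: 0; 2; 1; 1]; [:: 0; 3; 3; 3]; [:: 0; 3; 3; 0]].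
Definition tab8 : seq (seq nat) := [:: [:: 0; 6; 6; 0; 2; 4; 2; 3]; [:: 0; 4; 3; 5; 3; 5; 1; 1]; [:: 0; 2; 1; 5; 1; 6; 3; 1]; [:: 0; 7; 0; 3; 2; 7; 2; 5]; [:: 0; 3; 7; 0; 5; 0; 2; 6]; [:: 0; 3; 1; 1; 7; 6; 4; 0]; [:: 0; 1; 2; 1; 7; 7; 7; 2]; [:: 0; 1; 2; 4; 3; 5; 6; 5]; [:: 0; 0; 0; 6; 0; 1; 3; 5]; [:: 0; 7; 4; 0; 0; 0; 5; 6]; [:: 0; 4; 5; 5; 3; 7; 5; 6]].
Definition tab9 : seq (seq nat) := [:: [:: 0; 1; 1; 6; 6; 4; 0; 6; 2]; [:: 0; 0; 2; 8; 2; 8; 7; 3; 7]; [:: 0; 4; 7; 2; 1; 2; 8; 7; 4]; [:: 0; 3; 1; 1; 8; 3; 8; 1; 3]; [:: 0; 2; 0; 1; 7; 3; 2; 3; 8]; [:: 0; 7; 6; 2; 5; 2; 2; 8; 5]; [:: 0; 0; 3; 2; 3; 5; 6; 2; 5]; [:: 0; 6; 0; 3; 1; 0; 4; 5; 0]; [:: 0; 3; 1; 7; 2; 2; 8; 6; 6]; [:: 0; 2; 3; 2; 7; 4; 6; 6; 7]; [:: 0; 1; 2; 6; 5; 4; 4; 1; 3]].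
Definition tab12 : seq (seq nat) := [:: [:: 0; 7; 3; 8; 7; 1; 7; 11; 11; 0; 1; 7]; [:: 0; 8; 2; 9; 6; 11; 10; 6; 3; 5; 11; 7]; [:: 0; 4; 6; 10; 2; 11; 1; 3; 10; 8; 6; 8]; [:: 0; 6; 8; 0; 8; 8; 5; 10; 8; 6; 7; 6]; [:: 0; 9; 0; 2; 1; 9; 4; 4; 6; 5; 8; 3]; [:: 0; 5; 4; 10; 1; 0; 7; 4; 3; 9; 8; 3]; [:: 0; 1; 6; 11; 4; 11; 5; 0; 1; 4; 1; 1]; [:: 0; 1; 5; 3; 10; 6; 10; 2; 7; 8; 3; 5]; [:: 0; 10; 8; 7; 10; 0; 0; 5; 11; 8; 0; 4]; [:: 0; 6; 4; 1; 1; 1; 2; 3; 4; 2; 11; 7]; [:: 0; 11; 5; 0; 8; 7; 4; 8; 1; 2; 8; 3]].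
Definition tab24 : seq (seq nat) := [:: [:: 0; 14; 15; 10; 7; 0; 15; 2; 6; 1; 15; 0; 13; 5; 1; 1; 1; 11; 4; 20; 13; 3; 8; 7]; [:: 0; 16; 7; 12; 23; 16; 16; 18; 14; 1; 14; 23; 8; 2; 20; 17; 16; 9; 6; 6; 15; 7; 7; 13]; [:: 0; 16; 6; 14; 10; 12; 5; 3; 23; 0; 2; 20; 23; 10; 22; 20; 19; 0; 12; 12; 11; 9; 15; 16]; [:: 0; 5; 5; 19; 16; 21; 7; 6; 17; 20; 0; 17; 0; 23; 5; 4; 15; 11; 2; 7; 21; 11; 15; 3]; [:: 0; 13; 14; 19; 3; 1; 6; 14; 11; 14; 5; 2; 1; 6; 16; 6; 17; 7; 21; 11; 2; 1; 10; 20]; [:: 0; 23; 4; 20; 0; 8; 23; 23; 13; 23; 22; 6; 15; 6; 2; 18; 3; 21; 4; 16; 3; 16; 10; 7]; [:: 0; 20; 20; 18; 22; 2; 14; 0; 1; 23; 18; 4; 23; 17; 7; 3; 11; 23; 14; 15; 7; 13; 6; 23]; [:: 0; 7; 15; 0; 9; 15; 12; 1; 3; 20; 1; 11; 10; 23; 3; 17; 19; 7; 16; 12; 21; 14; 16; 22]; [:: 0; 13; 18; 7; 10; 22; 13; 16; 22; 13; 4; 11; 18; 19; 18; 18; 17; 0; 23; 19; 10; 7; 11; 7]; [:: 0; 10; 16; 18; 5; 17; 3; 7; 2; 15; 11; 0; 3; 20; 11; 9; 9; 12; 14; 23; 9; 21; 20; 7]; [:: 0; 10; 21; 2; 9; 4;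 18; 20; 9; 7; 18; 19; 1; 15; 20; 10; 2; 15; 0; 8; 3; 19; 21; 5]].
Definition tab27 : seq (seq nat) := [:: [:: 0; 3; 15; 14; 3; 19; 3; 21; 26; 23; 0; 20; 1; 11; 18; 25; 19; 23; 14; 23; 4; 2; 9; 15; 19; 6; 0]; [:: 0; 24; 23; 11; 26; 26; 19; 21; 7; 15; 5; 17; 18; 9; 25; 5; 16; 2; 23; 7; 18; 5; 7; 2; 4; 8; 21]; [:: 0; 26; 12; 17; 23; 7; 7; 15; 9; 14; 6; 18; 10; 12; 17; 3; 11; 18; 26; 3; 21; 15; 20; 23; 21; 20; 16]; [:: 0; 14; 8; 18; 10; 20; 6; 17; 22; 25; 11; 10; 22; 8; 23; 18; 11; 18; 26; 9; 0; 6; 12; 10; 1; 0; 12]; [:: 0; 23; 19; 7; 11; 1; 6; 6; 23; 9; 7; 22; 12; 1; 22; 11; 17; 0; 19; 16; 19; 11; 4; 15; 6; 3; 19]; [:: 0; 8; 22; 8; 26; 6; 16; 13; 6; 6; 2; 5; 26; 9; 15; 15; 13; 11; 2; 7; 5; 18; 18; 19; 8; 26; 0]; [:: 0; 12; 1; 20; 26; 15; 13; 2; 7; 19; 5; 17; 9; 21; 3; 12; 20; 12; 11; 21; 25; 15; 3; 5; 8; 21; 13]; [:: 0; 14; 10; 17; 21; 5; 19; 25; 8; 23; 13; 1; 12; 23; 25; 8; 10; 19; 3; 14; 9; 7; 9; 17; 13; 20; 19]; [:: 0; 22; 10; 11; 14; 7; 14; 22; 18; 15; 12; 12; 22; 11;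 9; 24; 7; 1; 13; 20; 19; 19; 6; 3; 16; 26; 10]; [:: 0; 23; 22; 0; 20; 2; 24; 20; 12; 19; 19; 3; 3; 15; 19; 24; 3; 5; 20; 21; 12; 8; 20; 25; 1; 18; 6]; [:: 0; 4; 9; 16; 6; 15; 5; 8; 15; 13; 13; 15; 10; 7; 26; 11; 11; 23; 19; 14; 2; 8; 18; 14; 9; 6; 12]].
Lemma good4 : Good 4.
Proof. apply: (zn_good (g := tabg tab4)) => //; apply: checkb_cond; by vm_compute. Qed.
Lemma good8 : Good 8.
Proof. apply: (zn_good (g := tabg tab8)) => //; apply: checkb_cond; by vm_compute. Qed.
Lemma good9 : Good 9.
Proof. apply: (zn_good (g := tabg tab9)) => //; apply: checkb_cond; by vm_compute. Qed.
Lemma good12 : Good 12.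
Proof. apply: (zn_good (g := tabg tab12)) => //; apply: checkb_cond; by vm_compute. Qed.
Lemma good24 : Good 24.
Proof. apply: (zn_good (g := tabg tab24)) => //; apply: checkb_cond; by vm_compute. Qed.
Lemma good27 : Good 27.
Proof. apply: (zn_good (g := tabg tab27)) => //; apply: checkb_cond; by vm_compute. Qed.


Lemma good_pow2 a : a != 1 -> Good (2 ^ a).
Proof.
elim/ltn_ind: a => a IH na1.
case: a IH na1 => [|[|[|[|k]]]] IH na1 //; first by rewrite expn0; exact: good1.
- exact: good4.
- exact: good8.
rewrite (_ : 2 ^ k.+4 = 4 * 2 ^ k.+2); last by rewrite -[k.+4]/(2 + k.+2) expnD.
by apply: good_mul good4 (IH _ _ _).
Qed.

Lemma good_pow3 a : a != 1 -> Good (3 ^ a).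
Proof.
elim/ltn_ind: a => a IH na1.
case: a IH na1 => [|[|[|[|k]]]] IH na1 //; first by rewrite expn0; exact: good1.
- exact: good9.
- exact: good27.
rewrite (_ : 3 ^ k.+4 = 9 * 3 ^ k.+2); last by rewrite -[k.+4]/(2 + k.+2) expnD.
by apply: good_mul good9 (IH _ _ _).
Qed.

Lemma good_pow2_3 a : 2 <= a -> Good (2 ^ a * 3).
Proof.
elim/ltn_ind: a => a IH a2.
case: a IH a2 => [|[|[|[|k]]]] IH a2 //.
- exact: good12.
- exact: good24.
rewrite (_ : 2 ^ k.+4 * 3 = 4 * (2 ^ k.+2 * 3)); last by rewrite -[k.+4]/(2 + k.+2) expnD mulnA.
by apply: good_mul good4 (IH _ _ _).
Qed.

Lemma good_adm v : 0 < v -> gcdn v 4 != 2 -> gcdn v 18 != 3 -> Good v.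
Proof.
move=> v0 h4 h18.
have [m c2 ev] := pfactor_coprime (isT : prime 2) v0.
have m0 : 0 < m by move: v0; rewrite ev muln_gt0 => /andP[].
have [m' c3 em] := pfactor_coprime (isT : prime 3) m0.
set a := logn 2 v in ev; set b := logn 3 m in em.
have m'0 : 0 < m' by move: m0; rewrite em muln_gt0 => /andP[].
have c2' : coprime 2 m' by move: c2; rewrite em coprimeMr => /andP[].
have c6 : coprime m' 6 by rewrite (_ : 6 = 2 * 3) // coprimeMr !(coprime_sym m') c2' c3.
have na1 : a != 1.
  apply/eqP => a1; move: h4; rewrite ev a1 expn1 (_ : 4 = 2 * 2) //.
  by rewrite -muln_gcdl gcdnC (eqP c2).
have hb : (b != 1) || (2 <= a).
  case: (b =P 1) => //= b1; case: a na1 ev {h4} => [|[|a]] // _ ev.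
  move: h18; rewrite ev em b1 expn0 muln1 expn1 (_ : 18 = 6 * 3) // -muln_gcdl.
  by rewrite (eqP c6).
have -> : v = m' * (2 ^ a * 3 ^ b) by rewrite ev em -mulnA [3 ^ _ * _]mulnC.
apply: good_mul; first exact: good_cop6.
case/orP: hb => hb; first exact: good_mul (good_pow2 na1) (good_pow3 hb).
case: (b =P 1) => [b1|/eqP nb1]; first by rewrite b1 expn1; exact: good_pow2_3.
exact: good_mul (good_pow2 na1) (good_pow3 nb1).
Qed.


Lemma card_bigcup_le (I T : finType) (P : pred I) (F : I -> {set T}) :
  #|\bigcup_(i | P i) F i| <= \sum_(i | P i) #|F i|.
Proof.
elim/big_rec2: _ => [|i n U _ IH]; first by rewrite cards0.
rewrite cardsU; apply: leq_trans (leq_subr _ _) _; by rewrite leq_add2l.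
Qed.

Section CDA.
Variables (v d : nat) (B : 'I_v -> 'I_v -> 'I_v -> nat -> 'I_v).
Hypothesis (HB : GoodP B) (d0 : 0 < d) (dv : d + 1 <= v).

Let v0 : 0 < v. Proof. by apply: leq_trans dv; rewrite addn1. Qed.
Let N := (d + 1) * v ^ 2.

Lemma zo_lt (r : 'I_N) : r %/ v %/ v < v.
Proof.
apply: leq_trans dv; rewrite !ltn_divLR // -mulnA mulnn; exact: ltn_ord.
Qed.

Definition zo (r : 'I_N) : 'I_v := Ordinal (zo_lt r).
Definition xo (r : 'I_N) : 'I_v := Ordinal (ltn_pmod (r %/ v) v0).
Definition yo (r : 'I_N) : 'I_v := Ordinal (ltn_pmod r v0).

Lemma enc_lt z (x y : 'I_v) : z < d + 1 -> (z * v + x) * v + y < N.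
Proof.
move=> hz; have hx := ltn_ord x; have hy := ltn_ord y.
rewrite /N -mulnn mulnA.
have h1 : (z * v + x) * v + y < (z * v + x).+1 * v by nia.
apply: (leq_trans h1); rewrite leq_mul2r; apply/orP; right.
have h2 : (z * v + x).+1 <= z.+1 * v by nia.
apply: (leq_trans h2); rewrite leq_mul2r; apply/orP; right; exact: hz.
Qed.

Definition enc z (x y : 'I_v) (hz : z < d + 1) : 'I_N := Ordinal (enc_lt x y hz).

Lemma dec_enc z x y (hz : z < d + 1) :
  [/\ (zo (enc x y hz) : nat) = z, xo (enc x y hz) = x & yo (enc x y hz) = y].
Proof.
have hx := ltn_ord x; have hy := ltn_ord y.
split; [| apply: val_inj | apply: val_inj]; rewrite /= ?divnMDl ?modnMDl ?(divn_small hy) ?addn0 //.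
- by rewrite divnMDl // divn_small // addn0.
- by rewrite modnMDl modn_small.
- by rewrite modn_small.
Qed.

Lemma dec_inj r1 r2 : zo r1 = zo r2 -> xo r1 = xo r2 -> yo r1 = yo r2 -> r1 = r2.
Proof.
move=> /(congr1 val) /= e1 /(congr1 val) /= e2 /(congr1 val) /= e3.
apply: val_inj => /=.
by rewrite (divn_eq r1 v) (divn_eq r2 v) (divn_eq (r1 %/ v) v) (divn_eq (r2 %/ v) v) e1 e2 e3.
Qed.

Definition A (r : 'I_N) (c : 'I_11) : 'I_v := B (zo r) (xo r) (yo r) c.

Definition Bn (r : 'I_N) (c : nat) : 'I_v := B (zo r) (xo r) (yo r) c.

Lemma rhoP (T : cinter 11 2 v) r : valid_inter T ->
  (r \in rho A T) = (Bn r T.1 == T.2 ord0) && (Bn r T.1.+1 == T.2 ord_max).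
Proof.
rewrite /valid_inter => vT.
have h0 : T.1 < 11 by lia.
have h1 : T.1.+1 < 11 by lia.
rewrite inE; apply/forallP/andP.
  move=> H; split.
    by have := forallP (H ord0) (Ordinal h0); rewrite /= addn0 eqxx.
  by have := forallP (H ord_max) (Ordinal h1); rewrite /= addn1 eqxx.
case=> e0 e1 j; apply/forallP => c; apply/implyP => /eqP ec.
rewrite /A; case: j ec => [[|[|//]] hj] /= ec.
  by rewrite ec addn0 (_ : Ordinal hj = ord0) //; apply: val_inj.
by rewrite ec addn1 (_ : Ordinal hj = ord_max) //; apply: val_inj.
Qed.

Lemma surj (z : 'I_v) i (a b : 'I_v) : i < 10 ->
  exists x y, B z x y i = a /\ B z x y i.+1 = b.
Proof.
move=> hi.
pose f (p : 'I_v * 'I_v) := (B z p.1 p.2 i, B z p.1 p.2 i.+1).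
have finj : injective f.
  move=> [x y] [x' y'] [e1 e2].
  by case: (HB.1 _ _ _ _ _ _ hi e1 e2) => -> ->.
have [g fK gK] := injF_bij finj.
exists (g (a, b)).1, (g (a, b)).2.
by have := gK (a, b); rewrite /f => -[-> ->].
Qed.

Lemma cover_layer (T : cinter 11 2 v) z (hz : z < d + 1) : valid_inter T ->
  exists2 r, r \in rho A T & (zo r : nat) = z.
Proof.
move=> vT.
have hi : T.1 < 10 by move: vT; rewrite /valid_inter addn2.
have [x [y [e1 e2]]] := surj (Ordinal (leq_trans hz dv)) (T.2 ord0) (T.2 ord_max) hi.
have [ez ex ey] := dec_enc x y hz.
exists (enc x y hz) => //.
rewrite rhoP // /Bn ex ey (_ : zo _ = Ordinal (leq_trans hz dv)) ?e1 ?e2 ?eqxx //.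
exact: val_inj.
Qed.

Lemma rho_big (T : cinter 11 2 v) : valid_inter T -> d + 1 <= #|rho A T|.
Proof.
move=> vT.
have hdv : d + 1 <= v := dv.
have sub : [set widen_ord hdv k | k in 'I_(d + 1)] \subset zo @: rho A T.
  apply/subsetP => _ /imsetP[k _ ->].
  have [r hr ez] := cover_layer (ltn_ord k) vT.
  apply/imsetP; exists r => //; exact: val_inj.
have := subset_leq_card sub.
rewrite card_imset; last by move=> a b /(congr1 val) /= e; apply: val_inj.
rewrite card_ord => h; apply: leq_trans h _; exact: leq_imset_card.
Qed.

Lemma rho_inter (T T' : cinter 11 2 v) : valid_inter T -> valid_inter T' -> T != T' ->
  #|rho A T :&: rho A T'| <= 1.
Proof.
move=> vT vT' nT.
apply/card_le1_eqP => r1 r2; rewrite !in_setI !rhoP // => /andP[/andP[/eqP a1 /eqP b1] /andP[/eqP c1 /eqP d1]]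
  /andP[/andP[/eqP a2 /eqP b2] /andP[/eqP c2 /eqP d2]].
have gen : forall (T T' : cinter 11 2 v), valid_inter T' -> T.1 < T'.1 ->
   Bn r1 T.1 = T.2 ord0 -> Bn r1 T.1.+1 = T.2 ord_max ->
   Bn r1 T'.1 = T'.2 ord0 -> Bn r1 T'.1.+1 = T'.2 ord_max ->
   Bn r2 T.1 = T.2 ord0 -> Bn r2 T.1.+1 = T.2 ord_max ->
   Bn r2 T'.1 = T'.2 ord0 -> Bn r2 T'.1.+1 = T'.2 ord_max -> r1 = r2.
  move=> U U' vU' lt p1 p2 p3 p4 q1 q2 q3 q4.
  have j9 : U'.1 <= 9 by move: vU'; rewrite /valid_inter addn2.
  have [ez ex ey] := HB.2 _ _ _ _ _ _ _ _ lt j9 (etrans p1 (esym q1)) (etrans p2 (esym q2))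
     (etrans p3 (esym q3)) (etrans p4 (esym q4)).
  exact: dec_inj.
case: (ltngtP T.1 T'.1) => [lt|lt|eq].
- apply/esym; exact: (gen T T' vT' lt a1 b1 c1 d1 a2 b2 c2 d2).
- apply/esym; exact: (gen T' T vT lt c1 d1 a1 b1 c2 d2 a2 b2).
exfalso; move/eqP: nT; apply.
have e1 : T.1 = T'.1 by apply: val_inj.
have e2 : T.2 = T'.2.
  apply/ffunP => j; case: j => [[|[|//]] hj].
    rewrite (_ : Ordinal hj = ord0); last exact: val_inj.
    by rewrite -a1 -c1 /Bn eq.
  rewrite (_ : Ordinal hj = ord_max); last exact: val_inj.
  by rewrite -b1 -d1 /Bn eq.
by case: T e1 e2 {a1 b1 c1 d1 a2 b2 c2 d2 vT eq} => ? ? /= -> ->; case: T' {vT'}.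
Qed.

Lemma cda_main : is_CDA d 2 A.
Proof.
split.
  move=> T vT; have h0 : 0 < d + 1 by rewrite addn1.
  have [r hr _] := cover_layer h0 vT.
  by apply/set0Pn; exists r.
move=> S T vS cS vT; split; last first.
  by move=> TS; apply/subsetP => r hr; apply/bigcupP; exists T.
move=> sub; apply/negPn/negP => nTS.
have : #|rho A T| <= d.
  have sub2 : rho A T \subset \bigcup_(T' in S) (rho A T :&: rho A T').
    apply/subsetP => r hr; have := subsetP sub r hr.
    case/bigcupP => T' hT' hr'; apply/bigcupP; exists T' => //.
    by rewrite in_setI hr hr'.
  apply: leq_trans (subset_leq_card sub2) _.
  apply: leq_trans (card_bigcup_le _ _) _.
  rewrite -cS -sum1_card; apply: leq_sum => T' hT'.
  apply: rho_inter => //; first exact: vS.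
  by apply: contraNneq nTS => ->.
by move=> h; have := leq_trans (rho_big vT) h; rewrite addn1 ltnn.
Qed.

End CDA.

Lemma cda_of_good v d : 0 < d -> d + 1 <= v -> Good v ->
  exists A : 'I_((d + 1) * v ^ 2) -> 'I_11 -> 'I_v, is_CDA d 2 A.
Proof. move=> d0 dv [B HB]; exists (A B dv); exact: cda_main. Qed.


Theorem mainTheorem11 (v : nat) :
  2 <= v -> gcdn v 4 != 2 -> gcdn v 18 != 3 ->
  forall d : nat, 0 < d -> d + 1 <= v ->
    exists A : 'I_((d + 1) * v ^ 2) -> 'I_11 -> 'I_v, is_CDA d 2 A.
Proof.
move=> v2 h4 h18 d d0 dv.
apply: cda_of_good => //.
apply: good_adm => //; exact: leq_trans v2.
Qed.
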